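(* Let $\Lambda,\Gamma$ be finite simplicial graphs with complement graphs $\Lambda^c,\Gamma^c$, and suppose there is a surjective and locally surjective graph morphism $\Lambda^c\to\Gamma^c$. Then $C(\Gamma)$ is quasi-isometrically embedded in $C(\Lambda)$ (i.e. there is an injective homomorphism $C(\Gamma)\hookrightarrow C(\Lambda)$ which is a quasi-isometric embedding for the word metrics of the vertex generating sets).
   Context: The complement graph $\Gamma^c$ has vertex set $V(\Gamma)$, with two distinct vertices adjacent in $\Gamma^c$ iff they are not adjacent in $\Gamma$. A graph morphism $g\colon X\to Y$ is a map $V(X)\to V(Y)$ sending each pair of adjacent vertices to a pair of adjacent vertices. It is locally surjective if for every vertex $v$ of $X$ and every edge $e$ of $Y$ incident to $g(v)$ there is an edge $\tilde e$ of $X$ incident to $v$ with $g(\tilde e)=e$. The right-angled Coxeter group is $C(\Gamma)=\langle V(\Gamma)\mid v^2=1,\ [u,v]=1\text{ iff }\{u,v\}\in E(\Gamma)\rangle$. *)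

(* Defs.v *)
From Stdlib Require Import Relations.
From mathcomp Require Import all_boot.
From mathcomp Require Import boolp.
Set Implicit Arguments. Unset Strict Implicit. Unset Printing Implicit Defensive.

Definition simple_graph (T : finType) (e : rel T) : Prop :=
  symmetric e /\ irreflexive e.

Definition compl_graph (T : finType) (e : rel T) : rel T :=
  fun x y => (x != y) && ~~ e x y.

Definition graph_morphism (S T : finType) (eS : rel S) (eT : rel T)
  (g : S -> T) : Prop :=
  forall x y, eS x y -> eT (g x) (g y).

Definition locally_surjective (S T : finType) (eS : rel S) (eT : rel T)
  (g : S -> T) : Prop :=
  forall v w, eT (g v) w -> exists u, eS v u /\ g u = w.

(* Right-angled Coxeter group C(Gamma): words over the vertices modulo the
   congruence generated by  v v = 1  and  u v = v u  for adjacent u, v. *)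
Inductive racg_step (T : finType) (e : rel T) : seq T -> seq T -> Prop :=
| racg_cancel a b v : racg_step e (a ++ [:: v; v] ++ b) (a ++ b)
| racg_comm a b u v : e u v -> racg_step e (a ++ [:: u; v] ++ b) (a ++ [:: v; u] ++ b).

Definition racg_eq (T : finType) (e : rel T) : seq T -> seq T -> Prop :=
  clos_refl_sym_trans (seq T) (racg_step e).

Definition racg_len (T : finType) (e : rel T) (w : seq T) : nat :=
  ex_minn (P := fun n => `[< exists w', size w' = n /\ racg_eq e w w' >])
    (ex_intro _ (size w) (asboolT (ex_intro _ w (conj erefl (rst_refl _ _ w))))).

(* Word metric: d(g,h) = |g^{-1} h|; inverse of a word of involutions is its reverse. *)
Definition racg_dist (T : finType) (e : rel T) (w1 w2 : seq T) : nat :=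
  racg_len e (rev w1 ++ w2).

Definition racg_hom (TG TL : finType) (eG : rel TG) (eL : rel TL)
  (phi : TG -> seq TL) : Prop :=
  (forall v, racg_eq eL (phi v ++ phi v) [::]) /\
  (forall u v, eG u v -> racg_eq eL (phi u ++ phi v) (phi v ++ phi u)).

Definition hom_word (TG TL : finType) (phi : TG -> seq TL) (w : seq TG) : seq TL :=
  flatten (map phi w).

Definition racg_qi_embedding (TG TL : finType) (eG : rel TG) (eL : rel TL)
  (phi : TG -> seq TL) : Prop :=
  racg_hom eG eL phi /\
  (forall w, racg_eq eL (hom_word phi w) [::] -> racg_eq eG w [::]) /\
  exists K C : nat, 0 < K /\ forall w1 w2 : seq TG,
    racg_dist eG w1 w2 <= K * racg_dist eL (hom_word phi w1) (hom_word phi w2) + C /\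
    racg_dist eL (hom_word phi w1) (hom_word phi w2) <= K * racg_dist eG w1 w2 + C.

(* Main.v *)
From Stdlib Require Import Relations.
Require Import Defs.
From mathcomp Require Import all_boot.
From mathcomp Require Import boolp.
Set Implicit Arguments. Unset Strict Implicit. Unset Printing Implicit Defensive.


Lemma cat_split (X : Type) (a b c d : seq X) : a ++ b = c ++ d ->
  (exists k, c = a ++ k /\ b = k ++ d) \/ (exists k, a = c ++ k /\ d = k ++ b).
Proof.
elim: a c => [|x a IH] c /=.
  by move=> ->; left; exists c.
case: c => [|y c] /=.
  by move=> <-; right; exists (x :: a).
case=> -> /IH [[k [-> ->]]|[k [-> ->]]]; [left|right]; by exists k.
Qed.

Lemma rem_cat_notin (X : eqType) (x : X) s1 s2 : x \notin s1 ->
  rem x (s1 ++ x :: s2) = s1 ++ s2.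
Proof.
elim: s1 => [|y s1 IH] /=; first by rewrite eqxx.
rewrite in_cons negb_or => /andP [hy hs]; by rewrite eq_sym (negbTE hy) IH.
Qed.

Lemma filter_rem_in (X : eqType) (p : pred X) x s : p x ->
  filter p (rem x s) = rem x (filter p s).
Proof.
move=> px; elim: s => [|y s IH] //=.
case: (eqVneq y x) => [->|hyx]; first by rewrite px /= eqxx.
rewrite /=; case: (p y) => /=; by rewrite ?(negbTE hyx) IH.
Qed.

Lemma filter_rem_out (X : eqType) (p : pred X) x s : ~~ p x ->
  filter p (rem x s) = filter p s.
Proof.
move=> px; elim: s => [|y s IH] //=.
case: (eqVneq y x) => [->|hyx]; first by rewrite (negbTE px).
by rewrite /= IH.
Qed.

Lemma split_last (X : eqType) (x : X) r : x \in r ->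
  exists p s, r = p ++ x :: s /\ x \notin s.
Proof.
elim/last_ind: r => [|r y IH] //.
rewrite -cats1 mem_cat inE; case: (eqVneq x y) => [<-|hxy] /= h.
  by exists r, [::].
rewrite orbF in h; case: (IH h) => p [s [-> hs]].
exists p, (s ++ [:: y]); split; first by rewrite -catA.
by rewrite mem_cat inE negb_or hs hxy.
Qed.


Lemma step_ctx (T : finType) (e : rel T) c d w w' : racg_step e w w' ->
  racg_step e (c ++ w ++ d) (c ++ w' ++ d).
Proof.
case=> [a b v|a b u v huv].
  have -> : c ++ (a ++ [:: v; v] ++ b) ++ d = (c ++ a) ++ [:: v; v] ++ (b ++ d)
    by rewrite !catA.
  have -> : c ++ (a ++ b) ++ d = (c ++ a) ++ (b ++ d) by rewrite !catA.
  exact: racg_cancel.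
have -> : c ++ (a ++ [:: u; v] ++ b) ++ d = (c ++ a) ++ [:: u; v] ++ (b ++ d)
  by rewrite !catA.
have -> : c ++ (a ++ [:: v; u] ++ b) ++ d = (c ++ a) ++ [:: v; u] ++ (b ++ d)
  by rewrite !catA.
exact: racg_comm.
Qed.

Lemma eq_refl' (T : finType) (e : rel T) w : racg_eq e w w.
Proof. exact: rst_refl. Qed.
Lemma eq_sym' (T : finType) (e : rel T) w w' : racg_eq e w w' -> racg_eq e w' w.
Proof. exact: rst_sym. Qed.
Lemma eq_trans' (T : finType) (e : rel T) w1 w2 w3 :
  racg_eq e w1 w2 -> racg_eq e w2 w3 -> racg_eq e w1 w3.
Proof. exact: rst_trans. Qed.

Lemma eq_ctx (T : finType) (e : rel T) c d w w' : racg_eq e w w' ->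
  racg_eq e (c ++ w ++ d) (c ++ w' ++ d).
Proof.
elim=> {w w'}.
- by move=> x y h; apply: rst_step; apply: step_ctx.
- by move=> x; apply: rst_refl.
- by move=> x y _ h; apply: rst_sym.
- by move=> x y z _ h1 _ h2; apply: rst_trans h2.
Qed.

Lemma eq_cat (T : finType) (e : rel T) w1 w1' w2 w2' :
  racg_eq e w1 w1' -> racg_eq e w2 w2' -> racg_eq e (w1 ++ w2) (w1' ++ w2').
Proof.
move=> h1 h2; apply: (@eq_trans' _ _ _ (w1' ++ w2)).
  by have := eq_ctx [::] w2 h1.
by have := eq_ctx w1' [::] h2; rewrite !cats0.
Qed.

Lemma eq_move (T : finType) (e : rel T) x m : all (e x) m ->
  racg_eq e (x :: m) (m ++ [:: x]).
Proof.
elim: m => [|y m IH] /=; first by move=> _; apply: rst_refl.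
case/andP=> hxy hm.
apply: (@eq_trans' _ _ _ (y :: x :: m)).
  by apply: rst_step; have := @racg_comm _ e [::] m x y hxy.
by have := eq_ctx [:: y] [::] (IH hm); rewrite !cats0.
Qed.

Lemma eq_revcat (T : finType) (e : rel T) s : racg_eq e (rev s ++ s) [::].
Proof.
elim: s => [|x s IH]; first by apply: rst_refl.
rewrite rev_cons -cats1 -catA /=.
apply: eq_trans' IH.
by apply: rst_step; have := @racg_cancel _ e (rev s) s x.
Qed.

Lemma eq_comm_blocks (T : finType) (e : rel T) s t :
  (forall x y, x \in s -> y \in t -> e x y) ->
  racg_eq e (s ++ t) (t ++ s).
Proof.
elim: s => [|x s IH] h /=; first by rewrite cats0; apply: rst_refl.
apply: (@eq_trans' _ _ _ (x :: t ++ s)).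
  have := eq_ctx [:: x] [::] (IH (fun a b ha hb => h a b (ltac:(by rewrite inE ha orbT)) hb)).
  by rewrite !cats0.
have hm : all (e x) t by apply/allP => y hy; apply: h => //; rewrite inE eqxx.
have := eq_cat (eq_move hm) (eq_refl' e s).
by rewrite -catA.
Qed.

Lemma eq_rev_clique (T : finType) (e : rel T) s : uniq s ->
  (forall x y, x \in s -> y \in s -> x != y -> e x y) ->
  racg_eq e s (rev s).
Proof.
elim: s => [|x s IH] /=; first by move=> _ _; apply: rst_refl.
case/andP=> hx hu h.
rewrite rev_cons -cats1.
apply: (@eq_trans' _ _ _ (x :: rev s)).
  have := eq_ctx [:: x] [::] (IH hu (fun a b ha hb => h a b (ltac:(by rewrite inE ha orbT)) (ltac:(by rewrite inE hb orbT)))).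
  by rewrite !cats0.
apply: eq_move; apply/allP => y; rewrite mem_rev => hy.
apply: h; rewrite ?inE ?eqxx ?hy ?orbT //.
by apply/eqP => exy; rewrite exy hy in hx.
Qed.


Definition proj (T : finType) (a b : T) (r : seq T) := filter (pred2 a b) r.
Definition lastb (T : finType) (e : rel T) (r : seq T) x :=
  (x \in r) && [forall b, ~~ e x b ==> (last x (proj x b r) == x)].
Definition dell (T : finType) (x : T) r := rev (rem x (rev r)).
Definition stepr (T : finType) (e : rel T) r x :=
  if lastb e r x then dell x r else rcons r x.
Definition pequiv (T : finType) (e : rel T) r1 r2 :=
  forall a b, ~~ e a b -> proj a b r1 = proj a b r2.
Definition red (T : finType) (e : rel T) w := foldl (stepr e) [::] w.
Definition nored (T : finType) (e : rel T) (w : seq T) :=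
  forall p m s x, w = p ++ x :: m ++ x :: s -> ~~ all (e x) m.

Lemma lastb_ext (T : finType) (e : rel T) (hi : irreflexive e) r1 r2 x :
  (forall b, ~~ e x b -> proj x b r1 = proj x b r2) ->
  lastb e r1 x = lastb e r2 x.
Proof.
move=> h; rewrite /lastb.
have hx : (x \in r1) = (x \in r2).
  have := h x; rewrite hi => /(_ isT) hp.
  have mp : forall r, (x \in proj x x r) = (x \in r) by move=> r; rewrite /proj mem_filter /= eqxx.
  by rewrite -mp hp mp.
rewrite hx; congr (_ && _); apply: eq_forallb => b.
by case: (boolP (e x b)) => //= hb; rewrite h.
Qed.

Lemma proj_dell (T : finType) (a b x : T) r :
  proj a b (dell x r) = if pred2 a b x then dell x (proj a b r) else proj a b r.
Proof.
rewrite /proj /dell filter_rev; case: ifP => hp.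
  by rewrite filter_rem_in // filter_rev.
by rewrite filter_rem_out ?hp // filter_rev revK.
Qed.

Lemma proj_step (T : finType) (e : rel T) a b r x :
  proj a b (stepr e r x) = if pred2 a b x then
     (if lastb e r x then dell x (proj a b r) else rcons (proj a b r) x)
   else proj a b r.
Proof.
rewrite /stepr; case: ifP => hl; first by rewrite proj_dell; case: ifP.
by rewrite /proj filter_rcons; case: ifP.
Qed.

Lemma pequiv_refl (T : finType) (e : rel T) r : pequiv e r r.
Proof. by []. Qed.
Lemma pequiv_sym (T : finType) (e : rel T) r1 r2 : pequiv e r1 r2 -> pequiv e r2 r1.
Proof. by move=> h a b hab; rewrite h. Qed.
Lemma pequiv_trans (T : finType) (e : rel T) r1 r2 r3 :
  pequiv e r1 r2 -> pequiv e r2 r3 -> pequiv e r1 r3.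
Proof. by move=> h1 h2 a b hab; rewrite h1 // h2. Qed.

Lemma step_equiv (T : finType) (e : rel T) (hi : irreflexive e) r1 r2 x :
  pequiv e r1 r2 -> pequiv e (stepr e r1 x) (stepr e r2 x).
Proof.
move=> h a b hab; rewrite !proj_step (@lastb_ext _ _ hi r1 r2 x) ?h //.
by move=> c hc; apply: h.
Qed.

Lemma foldl_equiv (T : finType) (e : rel T) (hi : irreflexive e) r1 r2 w :
  pequiv e r1 r2 -> pequiv e (foldl (stepr e) r1 w) (foldl (stepr e) r2 w).
Proof.
elim: w r1 r2 => [|x w IH] r1 r2 h //=; apply: IH; exact: step_equiv.
Qed.

Lemma step_comm (T : finType) (e : rel T) (hs : symmetric e) (hi : irreflexive e) r u v :
  e u v -> pequiv e (stepr e (stepr e r u) v) (stepr e (stepr e r v) u).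
Proof.
move=> huv.
have huv' : u != v by apply/eqP => E; rewrite E hi in huv.
have keep : forall x y, e x y -> lastb e (stepr e r y) x = lastb e r x.
  move=> x y hxy; apply: (lastb_ext hi) => b hb; rewrite proj_step.
  have -> : pred2 x b y = false.
    apply/negbTE; rewrite /= negb_or; apply/andP; split.
      by apply/eqP => E; rewrite E hi in hxy.
    by apply/eqP => E; rewrite -E hxy in hb.
  by [].
move=> a b hab; rewrite !proj_step (keep _ _ huv) (keep v u); last by rewrite hs.
case: (boolP (pred2 a b u)) => hu; case: (boolP (pred2 a b v)) => hv //.
exfalso; move: hu hv => /= /orP [] /eqP hu /orP [] /eqP hv; subst.
- by rewrite eqxx in huv'.
- by rewrite huv in hab.
- by rewrite hs huv in hab.
- by rewrite eqxx in huv'.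
Qed.

Lemma lastbP (T : finType) (e : rel T) (hs : symmetric e) (hi : irreflexive e) r x :
  lastb e r x <-> exists p s, r = p ++ x :: s /\ all (e x) s.
Proof.
split.
  case/andP => hx /forallP hf.
  case: (split_last hx) => p [s [hr hxs]]; exists p, s; split => //.
  apply/allP => y hy; apply/negPn/negP => hn.
  have hyx : y != x by apply/eqP => E; rewrite -E hy in hxs.
  have hin : y \in filter (pred2 x y) s by rewrite mem_filter /= eqxx orbT hy.
  have := hf y; rewrite hn /= /proj hr filter_cat /= eqxx /= last_cat /=.
  case E: (filter (pred2 x y) s) hin => [|z l] // _ /=.
  have : last z l \in filter (pred2 x y) s by rewrite E mem_last.
  rewrite mem_filter => /andP [_ hl] /eqP hlx.
  by rewrite hlx (negbTE hxs) in hl.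
case=> p [s [-> hs']]; rewrite /lastb mem_cat inE eqxx orbT /=.
apply/forallP => b; apply/implyP => hb.
have E : filter (pred2 x b) s = [::].
  apply/eqP; rewrite -[_ == _]negbK -has_filter; apply/hasP => -[y hy /orP[]] /eqP E; subst y.
    by move/allP: hs' => /(_ x hy); rewrite hi.
  by move/allP: hs' => /(_ b hy); rewrite (negbTE hb).
by rewrite /proj filter_cat /= eqxx /= E last_cat.
Qed.


Lemma dell_cat (T : finType) (x : T) p s : x \notin s -> dell x (p ++ x :: s) = p ++ s.
Proof.
move=> hx; rewrite /dell rev_cat rev_cons -cats1 -catA /= rem_cat_notin ?mem_rev //.
by rewrite rev_cat !revK.
Qed.

Lemma all_notin (T : finType) (e : rel T) (hi : irreflexive e) x s :
  all (e x) s -> x \notin s.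
Proof. by move=> h; apply/negP => hx; move/allP: h => /(_ x hx); rewrite hi. Qed.

Lemma nored_step (T : finType) (e : rel T) (hs : symmetric e) (hi : irreflexive e) r x :
  nored e r -> nored e (stepr e r x).
Proof.
move=> hr; rewrite /stepr; case: ifP => hl.
  case/(lastbP hs hi): hl => p [s [Er hs']].
  rewrite Er dell_cat ?(all_notin hi hs') //.
  move=> P M S y E; apply/negP => hM.
  case: (cat_split E) => [[k [EP Es]]|[k [Ep Ed]]].
    by move: (hr (p ++ x :: k) M S y); rewrite Er Es -!catA /= hM => /(_ ltac:(by rewrite /= -?catA /= -?catA /= -?catA)).
  case: k Ep Ed => [|z k] Ep Ed.
    rewrite cats0 /= in Ep Ed; subst p.
    by move: (hr (P ++ [:: x]) M S y); rewrite Er -Ed -catA /= hM => /(_ ltac:(by rewrite /= -?catA /= -?catA /= -?catA)).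
  case: Ed => Ez Ed; subst z.
  case: (cat_split Ed) => [[k' [Ek ES]]|[k' [EM Es]]].
    case: k' Ek ES => [|z k'] Ek ES.
      rewrite cats0 /= in Ek ES; subst k.
      have hxy : e x y by move/allP: hs'; apply; rewrite -ES inE eqxx.
      move: (hr P (M ++ [:: x]) S y); rewrite Er Ep -ES -!catA /=.
      by move=> /(_ ltac:(by rewrite /= -?catA /= -?catA /= -?catA)); rewrite all_cat /= hs hxy hM.
    case: ES => Ez ES; subst z k.
    by move: (hr P M (k' ++ x :: s) y); rewrite Er Ep -!catA /= hM => /(_ ltac:(by rewrite /= -?catA /= -?catA /= -?catA)).
  subst M.
  have hxy : e x y by move/allP: hs'; apply; rewrite Es mem_cat inE eqxx orbT.
  move: (hr P (k ++ x :: k') S y); rewrite Er Ep Es -!catA /=.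
  move=> /(_ ltac:(by rewrite /= -?catA /= -?catA /= -?catA)); rewrite all_cat /= hs hxy /=.
  by move: hM; rewrite all_cat => /andP [-> ->].
move=> P M S y E; apply/negP => hM.
case/lastP: S E => [|S z] E.
  have : rcons r x = rcons (P ++ y :: M) y by rewrite E -cats1 -catA.
  move/eqP; rewrite eqseq_rcons => /andP [/eqP Er /eqP Exy]; subst.
  by move: hl; rewrite (proj2 (lastbP hs hi _ _)) //; exists P, M.
have : rcons r x = rcons (P ++ y :: M ++ y :: S) z.
  by rewrite E rcons_cat /= rcons_cat.
move/eqP; rewrite eqseq_rcons => /andP [/eqP Er _].
by move: (hr P M S y Er); rewrite hM.
Qed.

Lemma nored_red (T : finType) (e : rel T) (hs : symmetric e) (hi : irreflexive e) w :
  nored e (red e w).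
Proof.
elim/last_ind: w => [|w x IH].
  move=> p m s x E; exfalso; by case: p E.
by rewrite /red foldl_rcons; apply: nored_step.
Qed.

Lemma step_cancel (T : finType) (e : rel T) (hs : symmetric e) (hi : irreflexive e) r v :
  nored e r -> pequiv e (stepr e (stepr e r v) v) r.
Proof.
move=> hr; rewrite {2}/stepr; case: ifP => hl.
  case/(lastbP hs hi): (hl) => p [s [Er hs']].
  have hvs := all_notin hi hs'.
  have nl : lastb e (dell v r) v = false.
    apply/negP => /(lastbP hs hi) [P [S [E hS]]].
    move: E; rewrite Er dell_cat // => E.
    case: (cat_split E) => [[k [EP Es]]|[k [Ep Ed]]].
      by move: hvs; rewrite Es mem_cat inE eqxx orbT.
    case: k Ep Ed => [|z k] Ep Ed.
      by move: hvs; rewrite /= in Ed; rewrite -Ed inE eqxx.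
    case: Ed => Ez ES; subst z.
    move: (hr P k s v); rewrite Er Ep -catA /= => /(_ ltac:(by rewrite /= -?catA /= -?catA /= -?catA)).
    by move: hS; rewrite ES all_cat => /andP [->].
  rewrite /stepr nl Er dell_cat // => a b hab.
  rewrite /proj -cats1 -catA !filter_cat /=.
  have E : filter (pred2 a b) s = [::] \/ ~~ pred2 a b v.
    case: (boolP (pred2 a b v)) => hv; [left|by right].
    apply/eqP; rewrite -[_ == _]negbK -has_filter; apply/hasP => -[y hy hy'].
    move/allP: hs' => /(_ y hy) hvy.
    move: hv hy' => /orP [] /eqP Ev /orP [] /eqP Ey; subst.
    - by rewrite hi in hvy.
    - by rewrite hvy in hab.
    - by rewrite hs hvy in hab.
    - by rewrite hi in hvy.
  case: E => [->|hv]; first by case: ifP.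
  by move: hv; rewrite /= => /negbTE ->; rewrite cats0.
rewrite /stepr.
have -> : lastb e (rcons r v) v.
  by apply/(lastbP hs hi); exists r, [::]; rewrite cats1.
by rewrite -cats1 (@dell_cat _ v r [::] (ltac:(by rewrite in_nil))) cats0.
Qed.

Ltac cat_norm := rewrite /= -?catA /= -?catA /= -?catA /= -?catA /=.

Lemma nored_prefix (T : finType) (e : rel T) r t : nored e (r ++ t) -> nored e r.
Proof. by move=> h p m s x E; apply: (h p m (s ++ t) x); rewrite E; cat_norm. Qed.

Lemma nored_rcons (T : finType) (e : rel T) (hs : symmetric e) (hi : irreflexive e) r x :
  nored e (rcons r x) -> lastb e r x = false.
Proof.
move=> h; apply/negP => /(lastbP hs hi) [p [s [E hs']]].
by move: (h p s [::] x); rewrite E hs' -cats1 -catA /= => /(_ ltac:(by cat_norm)).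
Qed.

Lemma red_nored (T : finType) (e : rel T) (hs : symmetric e) (hi : irreflexive e) w :
  nored e w -> red e w = w.
Proof.
elim/last_ind: w => [|w x IH] // h.
have hw : nored e w by apply: (nored_prefix (t := [:: x])); rewrite cats1.
by rewrite /red foldl_rcons -/(red e w) IH // /stepr (nored_rcons hs hi h).
Qed.

Lemma size_red (T : finType) (e : rel T) w : size (red e w) <= size w.
Proof.
elim/last_ind: w => [|w x IH] //.
rewrite /red foldl_rcons -/(red e w) /stepr size_rcons; case: ifP => hl; last by rewrite size_rcons.
have hx : x \in rev (red e w) by rewrite mem_rev; case/andP: hl.
rewrite /dell size_rev size_rem // size_rev.
by apply: leq_trans (leq_pred _) _; apply: leq_trans IH _.
Qed.

Lemma pequiv_size (T : finType) (e : rel T) (hi : irreflexive e) r1 r2 :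
  pequiv e r1 r2 -> size r1 = size r2.
Proof.
move=> h; apply: perm_size; apply/allP => x _; apply/eqP.
have := h x x; rewrite hi => /(_ isT); rewrite /proj => E.
have F : forall r, count_mem x r = size (filter (pred2 x x) r).
  by move=> r; rewrite size_filter; apply: eq_count => y /=; rewrite orbb.
by rewrite !F E.
Qed.

Lemma red_step (T : finType) (e : rel T) (hs : symmetric e) (hi : irreflexive e) w w' :
  racg_step e w w' -> pequiv e (red e w) (red e w').
Proof.
case=> [a b v|a b u v huv]; rewrite /red !foldl_cat -/(red e a) /=; apply: foldl_equiv => //.
  by apply: (@step_cancel _ e hs hi); apply: nored_red.
exact: step_comm.
Qed.

Lemma red_eq (T : finType) (e : rel T) (hs : symmetric e) (hi : irreflexive e) w w' :
  racg_eq e w w' -> pequiv e (red e w) (red e w').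
Proof.
elim=> {w w'}.
- by move=> x y; apply: red_step.
- by move=> x; apply: pequiv_refl.
- by move=> x y _; apply: pequiv_sym.
- by move=> x y z _ h1 _ h2; apply: pequiv_trans h2.
Qed.

Lemma T1 (T : finType) (e : rel T) (hs : symmetric e) (hi : irreflexive e) w w' :
  nored e w -> racg_eq e w w' -> size w <= size w'.
Proof.
move=> hw heq.
rewrite -(red_nored hs hi hw) (pequiv_size hi (red_eq hs hi heq)).
exact: size_red.
Qed.

Lemma reduce (T : finType) (e : rel T) w : ~ nored e w ->
  exists w', racg_eq e w w' /\ size w' < size w.
Proof.
move=> hn.
have [p [m [s [x [E hm]]]]] : exists p m s x, w = p ++ x :: m ++ x :: s /\ all (e x) m.
  apply: contrapT => hne; apply: hn => p m s x E; apply/negP => hm.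
  by apply: hne; exists p, m, s, x.
exists (p ++ m ++ s); split.
  rewrite E; apply: eq_cat; first exact: eq_refl'.
  apply: (@eq_trans' _ _ _ ((m ++ [:: x]) ++ x :: s)).
    by have := eq_cat (eq_move hm) (eq_refl' e (x :: s)).
  rewrite -catA /=.
  by apply: rst_step; exact: (racg_cancel e m s x).
by rewrite E !size_cat /= size_cat /= !addnS ltnS leqnSn.
Qed.

Lemma len_spec (T : finType) (e : rel T) w :
  exists w', racg_eq e w w' /\ size w' = racg_len e w /\ nored e w'.
Proof.
rewrite /racg_len; case: ex_minnP => n /asboolP [w' [hs heq]] hmin.
exists w'; split => //; split => //.
apply: contrapT => hn; case: (reduce hn) => w'' [h1 h2].
have : n <= size w''.
  apply: hmin; apply/asboolP; exists w''; split => //; exact: eq_trans' h1.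
by rewrite leqNgt -hs h2.
Qed.

Lemma len_le (T : finType) (e : rel T) w w' : racg_eq e w w' -> racg_len e w <= size w'.
Proof.
rewrite /racg_len => h; case: ex_minnP => n _ hmin.
by apply: hmin; apply/asboolP; exists w'.
Qed.

Lemma len_eq (T : finType) (e : rel T) (hs : symmetric e) (hi : irreflexive e) w w' :
  racg_eq e w w' -> nored e w' -> racg_len e w = size w'.
Proof.
move=> h hn; apply/eqP; rewrite eqn_leq len_le //=.
case: (len_spec e w) => w'' [h1 [<- _]].
apply: (T1 hs hi hn); apply: eq_trans' h1; exact: eq_sym'.
Qed.


Lemma hom_word_cat (TG TL : finType) (f : TG -> seq TL) a b :
  hom_word f (a ++ b) = hom_word f a ++ hom_word f b.
Proof. by rewrite /hom_word map_cat flatten_cat. Qed.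

Lemma hom_eq (TG TL : finType) (eG : rel TG) (eL : rel TL) f w w' :
  racg_hom eG eL f -> racg_eq eG w w' -> racg_eq eL (hom_word f w) (hom_word f w').
Proof.
case=> h1 h2; elim=> {w w'}.
- move=> x y; case=> [a b v|a b u v huv]; rewrite !hom_word_cat.
    have := eq_ctx (hom_word f a) (hom_word f b) (h1 v).
    by rewrite /hom_word /= cats0 -catA.
  have := eq_ctx (hom_word f a) (hom_word f b) (h2 _ _ huv).
  by rewrite /hom_word /= !cats0 -!catA.
- by move=> x; apply: rst_refl.
- by move=> x y _ h; apply: rst_sym.
- by move=> x y z _ ha _ hb; apply: rst_trans hb.
Qed.

Lemma hom_blocks (TG TL : finType) (eL : rel TL) (f f' : TG -> seq TL) w :
  (forall u, racg_eq eL (f u) (f' u)) ->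
  racg_eq eL (flatten (map f w)) (flatten (map f' w)).
Proof.
move=> h; elim: w => [|u w IH] /=; first exact: rst_refl.
exact: eq_cat.
Qed.

Lemma flat_split (TG TL : eqType) (f : TG -> seq TL) w P x Q :
  flatten (map f w) = P ++ x :: Q ->
  exists wp u ws A B, [/\ w = wp ++ u :: ws, f u = A ++ x :: B,
    P = flatten (map f wp) ++ A & Q = B ++ flatten (map f ws)].
Proof.
elim: w P => [|u w IH] P /=; first by case: P.
move=> E; case: (cat_split E) => [[k [EP Ew]]|[k [Eu Ed]]].
  case: (IH _ Ew) => wp [u' [ws [A [B [E1 E2 E3 E4]]]]].
  exists (u :: wp), u', ws, A, B; split => //; first by rewrite E1.
  by rewrite EP E3 /= catA.
case: k Eu Ed => [|z k] Eu Ed.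
  rewrite cats0 in Eu; subst P.
  case: (IH [::] (esym Ed)) => wp [u' [ws [A [B [E1 E2 E3 E4]]]]].
  exists (u :: wp), u', ws, A, B; split => //; first by rewrite E1.
  by rewrite /= -catA -E3 cats0.
case: Ed => Ez EQ; subst z.
by exists [::], u, w, P, k.
Qed.


Definition fib (TL TG : finType) (g : TL -> TG) (v : TG) : seq TL :=
  [seq x <- enum TL | g x == v].

Lemma mem_fib (TL TG : finType) (g : TL -> TG) v x : (x \in fib g v) = (g x == v).
Proof. by rewrite /fib mem_filter mem_enum andbT. Qed.

Lemma uniq_fib (TL TG : finType) (g : TL -> TG) v : uniq (fib g v).
Proof. by rewrite /fib filter_uniq ?enum_uniq. Qed.

Lemma nored_transfer (TL TG : finType) (eL : rel TL) (eG : rel TG)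
  (hL : simple_graph eL) (g : TL -> TG)
  (g_loc : locally_surjective (compl_graph eL) (compl_graph eG) g) w :
  nored eG w -> nored eL (hom_word (fib g) w).
Proof.
case: hL => hsL hiL.
move=> hw P M S x E; apply/negP => hM.
case: (flat_split E) => wp [u [ws [A [B [E1 E2 E3 E4]]]]].
have hxB : x \notin B.
  by have := uniq_fib g u; rewrite E2 cat_uniq /= => /and4P []...
have [k [EM Ews]] : exists k, M = B ++ k /\ flatten (map (fib g) ws) = k ++ x :: S.
  case: (cat_split E4) => [[k [EB Ex]]|[k [EM Ews]]].
    case: k EB Ex => [|z k] EB Ex.
      by exists [::]; rewrite cats0 in EB; rewrite EB cats0.
    by case: Ex => Ez _; subst z; move: hxB; rewrite EB mem_cat inE eqxx orbT.
  by exists k.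
case: (flat_split Ews) => wm [u' [ws' [A' [B' [F1 F2 F3 F4]]]]].
have hu : g x = u by apply/eqP; rewrite -mem_fib E2 mem_cat inE eqxx orbT.
have hu' : g x = u' by apply/eqP; rewrite -mem_fib F2 mem_cat inE eqxx orbT.
subst u u'.
move: (hw wp wm ws' (g x)); rewrite E1 F1 => /(_ erefl) /negP; apply.
apply/allP => z hz; apply/negP => /negP hn.
have [y [hy1 hy2]] : exists y, y \in fib g z /\ ~~ eL x y.
  case: (eqVneq z (g x)) => [Ez|hz'].
    by exists x; rewrite mem_fib Ez eqxx hiL.
  have hc : compl_graph eG (g x) z by rewrite /compl_graph eq_sym hz' hn.
  case: (g_loc _ _ hc) => y [hy <-]; exists y; rewrite mem_fib eqxx; split => //.
  by case/andP: hy.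
have : y \in M.
  rewrite EM F3 !mem_cat; apply/orP; right; apply/orP; left.
  by apply/flatten_mapP; exists z.
by move/allP: hM => /(_ y) h /h; rewrite (negbTE hy2).
Qed.


Lemma len_eqv (T : finType) (e : rel T) (hs : symmetric e) (hi : irreflexive e) w1 w2 :
  racg_eq e w1 w2 -> racg_len e w1 = racg_len e w2.
Proof.
move=> h; case: (len_spec e w2) => w'' [h1 [<- h3]].
apply: len_eq => //; exact: eq_trans' h1.
Qed.

Unset Implicit Arguments.

Theorem corollary6p3 (TL TG : finType) (eL : rel TL) (eG : rel TG)
  (hL : simple_graph eL) (hG : simple_graph eG)
  (g : TL -> TG)
  (g_mor : graph_morphism (compl_graph eL) (compl_graph eG) g)
  (g_surj : forall y : TG, exists x : TL, g x = y)
  (g_loc : locally_surjective (compl_graph eL) (compl_graph eG) g) :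
  exists phi : TG -> seq TL, racg_qi_embedding eG eL phi.
Proof.
have hL' := hL; case: hL' => hsL hiL; case: hG => hsG hiG.
have clique : forall v x y, x \in fib g v -> y \in fib g v -> x != y -> eL x y.
  move=> v x y; rewrite !mem_fib => /eqP hx /eqP hy hxy; apply/negPn/negP => hn.
  have h : compl_graph eL x y by rewrite /compl_graph hxy hn.
  by have := g_mor x y h; rewrite /compl_graph hx hy eqxx.
have cross : forall u v x y, eG u v -> x \in fib g u -> y \in fib g v -> eL x y.
  move=> u v x y huv; rewrite !mem_fib => /eqP hx /eqP hy; apply/negPn/negP => hn.
  have hxy : x != y by apply/eqP => E; rewrite -hx -hy E hiG in huv.
  have h : compl_graph eL x y by rewrite /compl_graph hxy hn.
  by have := g_mor x y h; rewrite /compl_graph hx hy huv andbF.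
have hom : racg_hom eG eL (fib g).
  split.
    move=> v; apply: eq_trans' (eq_revcat eL (fib g v)); apply: eq_cat; last exact: eq_refl'.
    exact: eq_rev_clique (uniq_fib g v) (@clique v).
  by move=> u v huv; apply: eq_comm_blocks => x y hx hy; exact: cross huv hx hy.
have szF : forall w, size w <= size (hom_word (fib g) w) /\
                     size (hom_word (fib g) w) <= #|TL| * size w.
  elim=> [|u w [IH1 IH2]] //=; rewrite /hom_word /= size_cat -/(hom_word _ w) mulnS.
  split; last by apply: leq_add => //; rewrite /fib size_filter cardT count_size.
  case: (g_surj u) => x hx.
  have : x \in fib g u by rewrite mem_fib hx.
  case: (fib g u) => [|z l] //= _.
  by rewrite addSn ltnS; apply: leq_trans IH1 (leq_addl _ _).
have key : forall w, racg_len eG w <= racg_len eL (hom_word (fib g) w) /\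
                     racg_len eL (hom_word (fib g) w) <= #|TL| * racg_len eG w.
  move=> w; case: (len_spec eG w) => w' [h1 [h2 h3]].
  have hn := nored_transfer hL g_loc h3.
  rewrite (len_eq hsL hiL (hom_eq hom h1) hn) -h2; exact: szF.
exists (fib g); split => //; split.
  move=> w hw; case: (len_spec eG w) => w' [h1 [_ h3]].
  have hn := nored_transfer hL g_loc h3.
  have := T1 hsL hiL hn (eq_trans' (eq_sym' (hom_eq hom h1)) hw).
  rewrite leqn0 => /eqP hs0.
  have : size w' == 0 by rewrite -leqn0 -hs0; case: (szF w').
  by rewrite size_eq0 => /eqP E; rewrite E in h1.
exists #|TL|.+1, 0; split => // w1 w2.
have D : racg_dist eL (hom_word (fib g) w1) (hom_word (fib g) w2) =
         racg_len eL (hom_word (fib g) (rev w1 ++ w2)).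
  rewrite /racg_dist; apply: len_eqv => //.
  rewrite hom_word_cat; apply: eq_cat; last exact: eq_refl'.
  rewrite /hom_word rev_flatten -map_rev -map_rev -map_comp.
  apply: hom_blocks => u /=; apply: eq_sym'.
  exact: eq_rev_clique (uniq_fib g u) (@clique u).
rewrite D /racg_dist; case: (key (rev w1 ++ w2)) => hnm hm.
rewrite !addn0; split.
  by apply: leq_trans hnm _; rewrite mulSn leq_addr.
by apply: leq_trans hm _; rewrite mulSn leq_addl.
Qed.
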